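(* Let $X$ be a finite set with $|X|\ge2$ and $f:2^X\to\mathbb{R}_{\ge0}$ a normalized monotone submodular function possessing supermodularity of conditioning, with $f(x)>0$ for all $x\in X$. Then for all $S\subseteq X$ and $x\in X\setminus S$, \[ f(x\mid S)\ \ge\ \underline f(x\mid S)\ \ge\ f(x)\big(1-|S|\,\tau_2\big), \qquad\text{and hence}\qquad f(x\mid S)\ \ge\ f(x)\big(1-\min\{|S|\tau_2,1\}\big). \]
   Context: $f(x\mid A):=f(A\cup\{x\})-f(A)$, $f(x):=f(\{x\})$, $f(x\mid y):=f(x\mid\{y\})$. Pairwise lower estimate: $\underline f(x\mid S):=f(x)-\sum_{y\in S}(f(x)-f(x\mid y))$. The 2-cardinality curvature is $\tau_2:=1-\min_{x\in X,\ y\in X\setminus\{x\}} f(x\mid y)/f(x)$. Supermodularity of conditioning: for all $S\subseteq X$, $A\subseteq B\subseteq X$ and $C\subseteq X\setminus B$, $f(S\mid A)-f(S\mid A\cup C)\ge f(S\mid B)-f(S\mid B\cup C)$, where $f(T\mid A):=f(A\cup T)-f(A)$. *)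

(* Defs.v *)
From mathcomp Require Import all_boot all_order all_algebra.
Set Implicit Arguments. Unset Strict Implicit. Unset Printing Implicit Defensive.
Import Order.TTheory GRing.Theory Num.Theory.
Local Open Scope ring_scope.

Section Defs.
Variables (X : finType) (R : realFieldType) (f : {set X} -> R).

Definition condS (T A : {set X}) : R := f (A :|: T) - f A.
Definition cond (x : X) (A : {set X}) : R := f (x |: A) - f A.
Definition fx (x : X) : R := f [set x].
Definition cond1 (x y : X) : R := cond x [set y].

Definition normalized := f set0 = 0.
Definition nonneg := forall A, 0 <= f A.
Definition monotone := forall A B : {set X}, A \subset B -> f A <= f B.
Definition submodular := forall A B : {set X}, f (A :|: B) + f (A :&: B) <= f A + f B.
Definition supermod_conditioning :=
  forall S A B C : {set X}, A \subset B -> [disjoint C & B] ->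
    condS S A - condS S (A :|: C) >= condS S B - condS S (B :|: C).

Definition lower_est (x : X) (S : {set X}) : R :=
  fx x - \sum_(y in S) (fx x - cond1 x y).

(* The min is over the (nonempty when #|X| >= 2) set of ordered pairs (x,y), x != y;
   it is seeded with the ratio of one such pair (1 if there is none). *)
Definition ratio (p : X * X) : R := cond1 p.1 p.2 / fx p.1.
Definition min_ratio : R :=
  let seed := if [pick p : X * X | p.1 != p.2] is Some p0 then ratio p0 else 1 in
  \big[Num.min/seed]_(p : X * X | p.1 != p.2) ratio p.
Definition tau2 : R := 1 - min_ratio.
End Defs.

(* Main.v *)
Require Import Defs.
From mathcomp Require Import all_boot all_order all_algebra.
From mathcomp Require Import lra.
Import Order.TTheory GRing.Theory Num.Theory.
Local Open Scope ring_scope.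

Lemma step1 (X : finType) (R : realFieldType) (f : {set X} -> R) :
  normalized f -> supermod_conditioning f ->
  forall (x y : X) (S : {set X}), y \notin S ->
    cond f x (y |: S) >= cond f x S - (fx f x - cond1 f x y).
Proof.
move=> hn hs x y S yS.
have hd : [disjoint [set y] & S] by rewrite disjoints1.
have := hs [set x] set0 S [set y] (sub0set S) hd.
rewrite /condS /cond /cond1 /cond /fx.
have E1 : f (set0 :|: [set x]) = f [set x] by congr f; apply/setP=> z; rewrite !inE.
have E2 : f (set0 :|: [set y] :|: [set x]) = f (x |: [set y]).
  by congr f; apply/setP=> z; rewrite !inE orbC.
have E3 : f (set0 :|: [set y]) = f [set y] by congr f; apply/setP=> z; rewrite !inE.
have E4 : f (S :|: [set x]) = f (x |: S) by congr f; apply/setP=> z; rewrite !inE orbC.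
have E5 : f (S :|: [set y] :|: [set x]) = f (x |: (y |: S)).
  by congr f; apply/setP=> z; rewrite !inE orbC [(z == y) || _]orbC.
have E6 : f (S :|: [set y]) = f (y |: S) by congr f; apply/setP=> z; rewrite !inE orbC.
rewrite E1 E2 E3 E4 E5 E6 hn; lra.
Qed.

Lemma part1 (X : finType) (R : realFieldType) (f : {set X} -> R) :
  normalized f -> supermod_conditioning f ->
  forall (x : X) (S : {set X}), cond f x S >= lower_est f x S.
Proof.
move=> hn hs x S.
move: {2}#|S| (erefl #|S|) => n; elim: n S => [|n IH] S hS.
  move/eqP: hS; rewrite cards_eq0 => /eqP ->.
  rewrite /lower_est big_set0 subr0 /cond /fx hn setU0 subr0 //.
have [y yS] : exists y, y \in S.
  by apply/set0Pn; rewrite -card_gt0 hS.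
have defS := setD1K yS.
have yS' : y \notin S :\ y by rewrite !inE eqxx.
have hS' : #|S :\ y| = n by move: hS; rewrite (cardsD1 y) yS => -[].
move: (S :\ y) yS' hS' defS => T yT hT <-.
have := IH _ hT; have := @step1 X R f hn hs x y T yT.
rewrite /lower_est big_setU1 //=.
lra.
Qed.

Lemma min_ratio_le (X : finType) (R : realFieldType) (f : {set X} -> R) (x y : X) :
  x != y -> min_ratio f <= Defs.ratio f (x, y).
Proof.
move=> xy; rewrite /min_ratio /=.
by apply: (ge_bigmin_seq _ (x, y)); rewrite ?mem_index_enum.
Qed.

Theorem mainTheorem7 (X : finType) (R : realFieldType) (f : {set X} -> R) :
  (2 <= #|X|)%N ->
  nonneg f -> normalized f -> monotone f -> submodular f ->
  supermod_conditioning f ->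
  (forall x : X, 0 < fx f x) ->
  forall (S : {set X}) (x : X), x \notin S ->
    [/\ cond f x S >= lower_est f x S,
        lower_est f x S >= fx f x * (1 - #|S|%:R * tau2 f)
      & cond f x S >= fx f x * (1 - Num.min (#|S|%:R * tau2 f) 1)].
Proof.
move=> _ hnn hn hm hsub hs hpos S x xS.
have P1 := @part1 X R f hn hs x S.
have P2 : lower_est f x S >= fx f x * (1 - #|S|%:R * tau2 f).
  rewrite /lower_est.
  have : \sum_(y in S) (fx f x - cond1 f x y) <= \sum_(y in S) (fx f x * tau2 f).
    apply: ler_sum => y yS.
    have xy : x != y by apply: contraNneq xS => ->.
    have := @min_ratio_le X R f _ _ xy; rewrite /Defs.ratio /= /tau2.
    have hp := hpos x.
    rewrite ler_pdivlMr // mulrBr mulr1 mulrC => h; lra.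
  rewrite sumr_const -[(fx f x * tau2 f) *+ _]mulr_natl => h; rewrite mulrBr mulr1; rewrite mulrCA in h; lra.
split => //.
have c0 : 0 <= cond f x S by rewrite /cond subr_ge0; apply: hm; apply: subsetUr.
rewrite /Order.min; case: ifP => h.
  exact: le_trans P2 P1.
have h' : 1 <= #|S|%:R * tau2 f by rewrite leNgt h.
rewrite subrr mulr0 //.
Qed.
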